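(* If $L \subseteq a^*$ is a regular language over a one-letter alphabet, then $\mathbb{OGI}^*(L)$ is regular.
   Context: Outfix-guided insertion: $x \leftarrow y = \{ x_1 u z v x_2 \mid x = x_1 u v x_2,\ y = u z v,\ u \neq \varepsilon,\ v \neq \varepsilon \}$, extended to languages by union over all pairs. $\mathbb{OGI}^{(0)}(L) = L$, $\mathbb{OGI}^{(i+1)}(L) = \mathbb{OGI}^{(i)}(L) \leftarrow \mathbb{OGI}^{(i)}(L)$, and $\mathbb{OGI}^*(L) = \bigcup_{i \geq 0} \mathbb{OGI}^{(i)}(L)$. *)

(* Defs.v *)
From mathcomp Require Import all_boot.
Set Implicit Arguments. Unset Strict Implicit. Unset Printing Implicit Defensive.

Definition word (Sigma : Type) := seq Sigma.
Definition lang (Sigma : Type) := word Sigma -> Prop.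

Record dfa (Sigma : finType) := DFA {
  dfa_state : finType;
  dfa_start : dfa_state;
  dfa_final : pred dfa_state;
  dfa_trans : dfa_state -> Sigma -> dfa_state }.

Definition dfa_accept (Sigma : finType) (A : dfa Sigma) (w : word Sigma) : bool :=
  @dfa_final Sigma A (foldl (@dfa_trans Sigma A) (@dfa_start Sigma A) w).

Definition regular (Sigma : finType) (L : lang Sigma) : Prop :=
  exists A : dfa Sigma, forall w, L w <-> dfa_accept A w.

Definition ogi_word (Sigma : Type) (x y : word Sigma) : lang Sigma :=
  fun w => exists x1 u v x2 z : word Sigma,
    [/\ x = x1 ++ u ++ v ++ x2, y = u ++ z ++ v, u <> [::], v <> [::]
      & w = x1 ++ u ++ z ++ v ++ x2].

Definition ogi_lang (Sigma : Type) (L1 L2 : lang Sigma) : lang Sigma :=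
  fun w => exists x y, [/\ L1 x, L2 y & ogi_word x y w].

Fixpoint ogi_iter (Sigma : Type) (i : nat) (L : lang Sigma) : lang Sigma :=
  match i with
  | 0 => L
  | i'.+1 => ogi_lang (ogi_iter i' L) (ogi_iter i' L)
  end.

Definition ogi_star (Sigma : Type) (L : lang Sigma) : lang Sigma :=
  fun w => exists i, ogi_iter i L w.

(* Main.v *)
Require Import Defs.
From mathcomp Require Import all_boot.
From mathcomp Require Import zify.
From Stdlib Require Import Classical.

Section S.
Variables (Sigma : finType) (a : Sigma).

Lemma ogi_unary (x y w : seq Sigma) : ogi_word x y w ->
  all (pred1 a) x -> all (pred1 a) y ->
  [/\ all (pred1 a) w, size x <= size w, size y <= size w,
      size w + 2 <= size x + size y & (2 <= size x) && (2 <= size y)].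
Proof.
case=> x1 [u [v [x2 [z [-> -> hu hv ->]]]]].
have hu' : 0 < size u by case: u hu.
have hv' : 0 < size v by case: v hv.
rewrite !all_cat => hx hy.
case/and4P: hx => -> -> -> ->; case/and3P: hy => _ -> _.
rewrite !size_cat; split => //; lia.
Qed.

Lemma foldl_pair (S1 S2 : Type) (f : S1 -> Sigma -> S1) (g : S2 -> Sigma -> S2)
  (w : seq Sigma) s t :
  foldl (fun p c => (f p.1 c, g p.2 c)) (s, t) w = (foldl f s w, foldl g t w).
Proof. by elim: w s t => //= c w IH s t; rewrite IH. Qed.

Lemma nseq_eq k (s : seq Sigma) : all (pred1 a) s -> size s = k -> nseq k a = s.
Proof. by move/all_pred1P => {2}-> ->. Qed.

Variable q : nat.
Definition cnt (s : option 'I_q.+1) (c : Sigma) : option 'I_q.+1 :=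
  if s is Some i then (if c == a then Some (inord (minn i.+1 q)) else None)
  else None.

Lemma cnt_none w : foldl cnt None w = None.
Proof. by elim: w. Qed.

Lemma cnt_some (i : 'I_q.+1) w : omap val (foldl cnt (Some i) w) =
  if all (pred1 a) w then Some (minn (i + size w) q) else None.
Proof.
elim: w i => [|c w IH] i /=.
  by rewrite addn0; congr Some; have := ltn_ord i; lia.
case: (c == a) => /=; last by rewrite cnt_none.
rewrite IH; case: (all _ _) => //.
rewrite inordK; last by lia.
congr Some; lia.
Qed.
End S.

Theorem theorem4p11 (Sigma : finType) (a : Sigma) (L : lang Sigma) :
  (forall w, L w -> w = nseq (size w) a) ->
  regular L -> regular (ogi_star L).
Proof.
move=> HL [A HA].
pose P := fun w : seq Sigma => L w \/ (all (pred1 a) w /\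
  exists q, [/\ 3 <= q, L (nseq q a) & q <= size w]).
have HLu : forall w, L w -> all (pred1 a) w by move=> w /HL; move/all_pred1P.
have HP : forall w, ogi_star L w <-> P w.
  move=> w; split.
    case=> i; elim: i w => [|i IH] w /=; first by left.
    case=> x [y [/IH Px /IH Py Hw]].
    have ux : all (pred1 a) x by case: Px => [/HLu|[]].
    have uy : all (pred1 a) y by case: Py => [/HLu|[]].
    case: (@ogi_unary _ a _ _ _ Hw ux uy) => uw sx sy sw /andP[s2x s2y].
    case: Px => [Lx|[_ [q [q3 Lq qx]]]]; last first.
      by right; split => //; exists q; split => //; apply: leq_trans sx.
    case: Py => [Ly|[_ [q [q3 Lq qy]]]]; last first.
      by right; split => //; exists q; split => //; apply: leq_trans sy.
    case: (leqP 3 (size x)) => hx.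
      right; split => //; exists (size x); split => //; by rewrite -HL.
    case: (leqP 3 (size y)) => hy.
      right; split => //; exists (size y); split => //; by rewrite -HL.
    left; have -> : w = x; last by [].
    move/all_pred1P: uw => ->; move/all_pred1P: ux => ->.
    congr nseq; have e : size w = size x by lia. exact: e.
  case=> [Lw|[uw [q [q3 Lq qw]]]]; first by exists 0.
  move/all_pred1P: uw => ->.
  have : exists i, ogi_iter i L (nseq q a) by exists 0.
  elim: (size w) qw => [|n IHn]; first by lia.
  rewrite leq_eqVlt => /orP[/eqP <- [i h]|/ltnSE hn]; first by exists i.
  move=> /(IHn hn) [i Hi].
  exists i.+1 => /=; exists (nseq n a), (nseq n a); split => //.
  exists [::], [:: a], (nseq (n - 2) a), [:: a], [:: a]; split => //=.
  - by apply: (@nseq_eq _ a); [rewrite /= all_cat all_pred1_nseq /= eqxx|rewrite /= size_cat size_nseq /=; lia].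
  - by apply: (@nseq_eq _ a); [rewrite /= all_pred1_nseq /= eqxx|rewrite /= size_nseq /=; lia].
  - by move/(congr1 size); rewrite size_nseq /=; lia.
  - by congr cons; apply: (@nseq_eq _ a); [rewrite /= all_cat all_pred1_nseq /= eqxx|rewrite /= size_cat size_nseq /=; lia].
case: (classic (exists q, (3 <= q) && dfa_accept A (nseq q a))) => [ex|nex].
  pose q := ex_minn ex.
  have [q3 Lq qmin] : [/\ 3 <= q, L (nseq q a) &
      forall r, 3 <= r -> L (nseq r a) -> q <= r].
    rewrite /q; case: ex_minnP => m /andP[m3 Am] mmin; split => //.
      by apply/HA.
    by move=> r r3 /HA Ar; apply: mmin; rewrite r3.
  exists (@DFA Sigma (dfa_state A * option 'I_q.+1)%type
     (dfa_start A, Some ord0)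
     (fun p => dfa_final p.1 || (omap val p.2 == Some q))
     (fun p c => (dfa_trans p.1 c, @cnt _ a q p.2 c))).
  move=> w; rewrite HP /dfa_accept /= foldl_pair /= (@cnt_some _ a q) /=.
  rewrite -[dfa_final _]/(dfa_accept A w) /P; split.
    case=> [/HA ->//|[uw [r [r3 Lr rw]]]]; apply/orP; right.
    rewrite uw; have := qmin r r3 Lr; move=> h; apply/eqP; congr Some; lia.
  case/orP=> [/HA Lw|]; first by left.
  case: ifP => // uw /eqP [] hq; right; split => //; exists q; split => //; lia.
exists A => w; rewrite HP /P -HA; split; last by left.
case=> [//|[_ [r [r3 Lr _]]]]; exfalso; apply: nex; exists r.
by rewrite r3 -HA.
Qed.
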